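(* Let $X$ be a locally convex space and let $h\in\mathscr{C}$. Then $[h=c]\subset[h^{\square}=c]$. If, in addition, $h\in\mathscr{D}$, then $[h=c]=[h^{\square}=c]$.
   Context: $X$ is a non-trivial Hausdorff locally convex space with topology $\tau$, $X^*$ its dual with weak-star topology $\omega^*$, $Z=X\times X^*$ with topology $\tau\times\omega^*$, $c(x,x^* )=\langle x,x^*\rangle$. The dual of $Z$ is identified with $Z$ via $z\cdot z'=\langle x,x'^*\rangle+\langle x',x^*\rangle$, and $f^{\square}(z)=\sup\{z\cdot z'-f(z')\mid z'\in Z\}$. $[f=g]=\{z\mid f(z)=g(z)\}$. $\mathscr{C}$ is the class of proper convex $f:Z\to\overline{\mathbb R}$ with $f\ge c$; $\mathscr{R}$ those in $\mathscr{C}$ that are $\tau\times\omega^*$-lsc; $\mathscr{D}=\{f\in\mathscr{R}\mid f^{\square}\ge c\}$. *)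

(* Defs.v *)
From HB Require Import structures.
From mathcomp Require Import all_boot all_order all_algebra.
From mathcomp Require Import all_classical all_reals all_analysis.
Set Implicit Arguments. Unset Strict Implicit. Unset Printing Implicit Defensive.
Import Order.TTheory GRing.Theory Num.Theory.
Import numFieldNormedType.Exports.
Local Open Scope classical_set_scope.
Local Open Scope ring_scope.

Section Fitzpatrick.
Variables (R : realType) (X : tvsType R).

Definition is_dual (f : X -> R) : Prop :=
  (forall (a : R) (u v : X), f (a *: u + v) = a * f u + f v) /\ continuous f.

Definition dualX := {f : X -> R | is_dual f}.

Definition Zsp := (X * dualX)%type.

Definition dpair (x : X) (xs : dualX) : R := sval xs x.

Definition cfun (z : Zsp) : \bar R := (dpair z.1 z.2)%:E.

Definition zdot (z z' : Zsp) : R := dpair z.1 z'.2 + dpair z'.1 z.2.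

Definition fsq (f : Zsp -> \bar R) (z : Zsp) : \bar R :=
  ereal_sup [set ((zdot z z')%:E - f z')%E | z' in [set: Zsp]].

Definition eqset (f g : Zsp -> \bar R) : set Zsp := [set z | f z = g z].

Definition properf (f : Zsp -> \bar R) : Prop :=
  (forall z, f z != -oo%E) /\ (exists z, (f z < +oo)%E).

Definition convexf (f : Zsp -> \bar R) : Prop :=
  forall (t : R) (z1 z2 z : Zsp), 0 < t < 1 ->
    z.1 = t *: z1.1 + (1 - t) *: z2.1 ->
    (forall v : X, sval z.2 v = t * sval z1.2 v + (1 - t) * sval z2.2 v) ->
    (f z <= t%:E * f z1 + (1 - t)%:E * f z2)%E.

(* lower semicontinuity for tau × omega^*: the weak-star neighbourhoods of
   x0^* are generated by the sets {x^* | |<v,x^*> - <v,x0^*>| < e, v in F},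
   F finite *)
Definition lsc_tw (f : Zsp -> \bar R) : Prop :=
  forall (z0 : Zsp) (r : R), (r%:E < f z0)%E ->
    exists U : set X, nbhs z0.1 U /\
    exists (F : seq X) (e : R), 0 < e /\
      forall z : Zsp, U z.1 ->
        (forall v, v \in F -> `|sval z.2 v - sval z0.2 v| < e) ->
        (r%:E < f z)%E.

Definition classC (f : Zsp -> \bar R) : Prop :=
  properf f /\ convexf f /\ (forall z, (cfun z <= f z)%E).

Definition classR (f : Zsp -> \bar R) : Prop := classC f /\ lsc_tw f.

Definition classD (f : Zsp -> \bar R) : Prop :=
  classR f /\ (forall z, (cfun z <= fsq f z)%E).

End Fitzpatrick.

(* Main.v *)
Require Import Defs.
From HB Require Import structures.
From mathcomp Require Import all_boot all_order all_algebra.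
From mathcomp Require Import boolp classical_sets reals.
From mathcomp Require Import ring lra.
Import Order.TTheory GRing.Theory Num.Theory.
Local Open Scope classical_set_scope.
Local Open Scope ring_scope.
Set Implicit Arguments. Unset Strict Implicit. Unset Printing Implicit Defensive.

From mathcomp Require Import all_classical all_reals all_analysis.
Import numFieldNormedType.Exports.
Section HB.
Variables (R : realType) (V : lmodType R).

Definition sublin (p : V -> R) :=
  (forall u w, p (u + w) <= p u + p w) /\
  (forall (t : R) u, 0 < t -> p (t *: u) <= t * p u).
Definition linf (f : V -> R) := forall (a : R) u w, f (a *: u + w) = a * f u + f w.
Definition convS (C : set V) :=
  forall (a : R) x y, 0 <= a -> a <= 1 -> C x -> C y -> C (a *: x + (1 - a) *: y).

Lemma sublinZ p t u : sublin p -> 0 < t -> p (t *: u) = t * p u.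
Proof.
move=> [_ hZ] t0; apply/eqP; rewrite eq_le hZ //=.
have := hZ t^-1 (t *: u); rewrite invr_gt0 t0 scalerA mulVf ?gt_eqF // scale1r => /(_ isT) h.
by rewrite -(ler_pM2l t0) mulrA mulfV ?gt_eqF // mul1r in h.
Qed.

Lemma sublin0 p : sublin p -> p 0 = 0.
Proof.
move=> sp; have := sublinZ (t := 2) 0 sp; rewrite scaler0 => /(_ (ltr0Sn _ 1)) h.
by apply/eqP; rewrite -subr_eq0; apply/eqP; rewrite [X in X - _]h; lra.
Qed.

Lemma sublinN p u : sublin p -> - p (- u) <= p u.
Proof.
move=> sp; have := sp.1 u (- u); rewrite subrr sublin0 //; lra.
Qed.

Section MO.
Variables (p : V -> R) (C : set V) (m : R) (c0 : V).
Hypotheses (sp : sublin p) (cC : convS C) (Cc0 : C c0) (mC : forall c, C c -> m <= p c).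

Definition MOset u := [set p (u + tc.1 *: tc.2) - tc.1 * m | tc in [set tc : R * V | 0 <= tc.1 /\ C tc.2]].
Definition MOq u := inf (MOset u).

Lemma ptc t c : 0 <= t -> C c -> t * m <= p (t *: c).
Proof.
rewrite le_eqVlt => /orP[/eqP <-|t0] Cc; first by rewrite mul0r scale0r sublin0.
by rewrite sublinZ // ler_pM2l // mC.
Qed.

Lemma MOlb u : lbound (MOset u) (- p (- u)).
Proof.
move=> _ [[t c] [/= t0 Cc] <-].
have h := sp.1 (u + t *: c) (- u); rewrite addrC addKr in h.
have := ptc t0 Cc; lra.
Qed.

Lemma MOne u : MOset u !=set0.
Proof. by exists (p (u + 0 *: c0) - 0 * m); exists (0, c0). Qed.

Lemma MOhas u : has_lbound (MOset u).
Proof. by exists (- p (- u)); apply: MOlb. Qed.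

Lemma MOle u t c : 0 <= t -> C c -> MOq u <= p (u + t *: c) - t * m.
Proof. by move=> t0 Cc; apply: ge_inf; [exact: MOhas| exists (t, c)]. Qed.

Lemma MO_le_p u : MOq u <= p u.
Proof. by have := MOle u (lexx 0) Cc0; rewrite scale0r addr0 mul0r subr0. Qed.

Lemma MO_neg c : C c -> MOq (- c) <= - m.
Proof.
by move=> Cc; have := MOle (- c) ler01 Cc; rewrite scale1r addNr sublin0 // mul1r sub0r.
Qed.

Lemma MO_sublin : sublin MOq.
Proof.
split.
- move=> u w.
  have key : forall a b, MOset u a -> MOset w b -> MOq (u + w) <= a + b.
    move=> _ _ [[t1 c1] [/= t10 C1] <-] [[t2 c2] [/= t20 C2] <-].
    have [s0|s0] := eqVneq (t1 + t2) 0.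
      have e1 : t1 = 0 by lra.
      have e2 : t2 = 0 by lra.
      subst t1 t2; rewrite !scale0r !addr0 !mul0r !subr0.
      by apply: le_trans (MO_le_p _) (sp.1 _ _).
    have sp0 : 0 < t1 + t2 by rewrite lt_neqAle eq_sym s0 addr_ge0.
    set a := t1 / (t1 + t2).
    have a0 : 0 <= a by rewrite divr_ge0 // ltW.
    have a1 : a <= 1 by rewrite ler_pdivrMr // mul1r lerDl.
    have Cc := cC a0 a1 C1 C2.
    apply: le_trans (MOle (u + w) (ltW sp0) Cc) _.
    have -> : (t1 + t2) *: (a *: c1 + (1 - a) *: c2) = t1 *: c1 + t2 *: c2.
      rewrite scalerDr !scalerA; congr (_ *: _ + _ *: _); rewrite /a.
        by rewrite mulrC -mulrA mulVf ?mulr1.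
      by rewrite mulrBr mulr1 mulrCA mulfV ?mulr1 //; lra.
    have := sp.1 (u + t1 *: c1) (w + t2 *: c2).
    have -> : u + t1 *: c1 + (w + t2 *: c2) = u + w + (t1 *: c1 + t2 *: c2).
      by rewrite addrACA.
    lra.
  have h1 : MOq (u + w) - MOq w <= MOq u.
    apply: (@lb_le_inf _ (MOset u)); first exact: MOne.
    move=> a ua; suff : MOq (u + w) - a <= MOq w by lra.
    apply: (@lb_le_inf _ (MOset w)); first exact: MOne.
    by move=> b wb; have := key _ _ ua wb; lra.
  lra.
- move=> t u t0.
  have h : MOq (t *: u) / t <= MOq u.
    apply: (@lb_le_inf _ (MOset u)); first exact: MOne.
    move=> _ [[t' c] [/= t'0 Cc] <-].
    rewrite ler_pdivrMr // mulrC.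
    have -> : t * (p (u + t' *: c) - t' * m) = p (t *: u + (t * t') *: c) - (t * t') * m.
      by rewrite -scalerA -scalerDr sublinZ // mulrBr mulrA.
    by apply: MOle => //; rewrite mulr_ge0 // ltW.
  by rewrite -ler_pdivrMl // mulrC.
Qed.

End MO.

Lemma linf_prop f : linf f ->
  [/\ f 0 = 0, forall u w, f (u + w) = f u + f w, forall a u, f (a *: u) = a * f u
    & forall u, f (- u) = - f u].
Proof.
move=> lf.
have f0 : f 0 = 0.
  by have := lf 1 0 0; rewrite scale1r addr0 mul1r => h; lra.
have fD u w : f (u + w) = f u + f w by have := lf 1 u w; rewrite scale1r mul1r.
have fZ a u : f (a *: u) = a * f u by have := lf a u 0; rewrite !addr0 f0 addr0.
split => // u; by rewrite -scaleN1r fZ mulN1r.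
Qed.

Lemma HB_core p : sublin p -> exists f, linf f /\ forall u, f u <= p u.
Proof.
move=> sp.
pose T := {q : V -> R | sublin q /\ forall u, q u <= p u}.
pose Rr := fun s t : T => `[< forall u, sval t u <= sval s u >].
have t0 : T by exists p; split => //.
have [| | |q qmax] := @ZL_preorder T t0 Rr.
- by move=> t; apply/asboolP => u.
- move=> r s t /asboolP h1 /asboolP h2; apply/asboolP => u; exact: le_trans (h2 u) (h1 u).
- move=> A Atot.
  have [[s0 As0]|A0] := pselect (A !=set0); last first.
    by exists t0 => s As; exfalso; apply: A0; exists s.
  pose Q := fun u => inf [set sval s u | s in A].
  have Qne u : [set sval s u | s in A] !=set0 by exists (sval s0 u); exists s0.
  have Qlb u : has_lbound [set sval s u | s in A].
    exists (- p (- u)) => _ [s As <-].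
    case: s {As} => s [ss sp'] /=; have := sp' (- u); have := sublinN u ss; lra.
  have Qle u s : A s -> Q u <= sval s u by move=> As; apply: ge_inf => //; exists s.
  have sQ : sublin Q.
    split.
    + move=> u w.
      have key : forall s1 s2, A s1 -> A s2 -> Q (u + w) <= sval s1 u + sval s2 w.
        move=> s1 s2 A1 A2.
        case: (Atot _ _ A1 A2) => /asboolP h.
          apply: le_trans (Qle _ _ A2) _; apply: le_trans ((svalP s2).1.1 u w) _.
          by rewrite lerD2r.
        apply: le_trans (Qle _ _ A1) _; apply: le_trans ((svalP s1).1.1 u w) _.
        by rewrite lerD2l.
      have h1 : Q (u + w) - Q w <= Q u.
        apply: lb_le_inf => // _ [s1 A1 <-]; suff : Q (u + w) - sval s1 u <= Q w by lra.
        apply: lb_le_inf => // _ [s2 A2 <-]; have := key _ _ A1 A2; lra.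
      lra.
    + move=> t u tp.
      have h : Q (t *: u) / t <= Q u.
        apply: lb_le_inf => // _ [s As <-].
        rewrite ler_pdivrMr // mulrC; apply: le_trans (Qle _ _ As) _.
        exact: (svalP s).1.2.
      by rewrite -ler_pdivrMl // mulrC.
  have Qp : forall u, Q u <= p u.
    by move=> u; apply: le_trans (Qle _ _ As0) ((svalP s0).2 u).
  exists (exist _ Q (conj sQ Qp)) => s As; apply/asboolP => u /=; exact: Qle.
- case: q qmax => q [sq qp] /= qmax.
  have qN v : q (- v) = - q v.
    have Cv : convS [set v] by move=> a x y _ _ -> ->; rewrite -scalerDl subrKC scale1r.
    have mC : forall c, [set v] c -> q v <= q c by move=> c ->.
    have sQ := MO_sublin sq Cv (erefl v) mC.
    have Qq : forall u, MOq q [set v] (q v) u <= p u.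
      by move=> u; apply: le_trans (MO_le_p sq (erefl v) mC u) (qp u).
    have /asboolP := qmax (exist _ _ (conj sQ Qq)) (asboolT (MO_le_p sq (erefl v) mC)).
    move=> /(_ (- v)) /= h.
    have h2 := MO_neg sq mC (erefl v).
    apply/eqP; rewrite eq_le (le_trans h h2) /=.
    by have := sublinN v sq; lra.
  exists q; split => // a u w.
  have qD x y : q (x + y) = q x + q y.
    apply/eqP; rewrite eq_le sq.1 /=.
    have := sq.1 (x + y) (- y); rewrite addrK qN; lra.
  rewrite qD; congr (_ + _).
  have [a0|a0|->] := ltgtP a 0; last by rewrite scale0r mul0r sublin0.
    have -> : a *: u = - ((- a) *: u) by rewrite scaleNr opprK.
    by rewrite qN sublinZ ?oppr_gt0 // mulNr opprK.
  by rewrite sublinZ.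
Qed.

Lemma MazurOrlicz p C m c0 : sublin p -> convS C -> C c0 ->
  (forall c, C c -> m <= p c) ->
  exists f, [/\ linf f, forall u, f u <= p u & forall c, C c -> m <= f c].
Proof.
move=> sp cC Cc0 mC.
have [f [lf fQ]] := HB_core (MO_sublin sp cC Cc0 mC).
exists f; split => //.
  by move=> u; apply: le_trans (fQ u) (MO_le_p sp Cc0 mC u).
move=> c Cc; have [_ _ _ fN] := linf_prop lf.
have := le_trans (fQ (- c)) (MO_neg sp mC Cc); rewrite fN; lra.
Qed.

End HB.
Lemma LL (R : realType) (A B G W : R) :
  (forall t, 0 < t -> t < 1 -> t ^+ 2 * A + (1 - t) ^+ 2 * G + t * (1 - t) * W <= t * B + (1 - t) * G) ->
  W <= B + G.
Proof.
move=> H; rewrite leNgt; apply/negP => hlt.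
set Dd := W - B - G; set K := W - A - G.
have D0 : 0 < Dd by rewrite /Dd; lra.
set t := Dd / (2 * (`|K| + Dd + 1)).
have den0 : 0 < 2 * (`|K| + Dd + 1) by have := normr_ge0 K; lra.
have t0 : 0 < t by rewrite /t divr_gt0.
have t1 : t * (2 * (`|K| + Dd + 1)) = Dd by rewrite /t mulfVK // gt_eqF.
have tl1 : t < 1.
  have : t * (2 * (`|K| + Dd + 1)) <= t * 1 + t * (2 * (`|K| + Dd + 1)) - t by lra.
  have := normr_ge0 K; nra.
have h := H t t0 tl1.
have h2 : Dd <= t * K.
  have e : t ^+ 2 * A + (1 - t) ^+ 2 * G + t * (1 - t) * W - (t * B + (1 - t) * G) = t * (Dd - t * K).
    by rewrite /Dd /K; ring.
  have : t * (Dd - t * K) <= 0 by rewrite -e; lra.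
  by rewrite pmulr_rle0 // subr_le0.
have hk : t * K <= t * `|K| by rewrite ler_pM2l // ler_norm.
have : t * `|K| < Dd.
  have := normr_ge0 K; nra.
lra.
Qed.

Section Fitz.
Variables (R : realType) (X : tvsType R).
Local Notation Z := (Zsp X).
Local Notation D := (dualX X).

Lemma dual_lin (d : D) (a : R) u v : sval d (a *: u + v) = a * sval d u + sval d v.
Proof. exact: (svalP d).1. Qed.

Lemma dual_D (d : D) u v : sval d (u + v) = sval d u + sval d v.
Proof. by have := dual_lin d 1 u v; rewrite scale1r mul1r. Qed.

Lemma dual_0 (d : D) : sval d 0 = 0.
Proof. by have := dual_D d 0 0; rewrite addr0 => h; lra. Qed.

Lemma dual_Z (d : D) (a : R) u : sval d (a *: u) = a * sval d u.
Proof. by have := dual_lin d a u 0; rewrite !addr0 dual_0 addr0. Qed.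

Lemma dcomb_subproof (s t : R) (f g : D) : is_dual (fun v => s * sval f v + t * sval g v).
Proof.
split.
  by move=> a u v; rewrite !dual_lin; ring.
move=> x; apply: (@continuousD _ R^o _ (fun v => s * sval f v) (fun v => t * sval g v)).
  apply: (@continuousM _ _ (fun=> s) (sval f)); [exact: cst_continuous|exact: (svalP f).2].
apply: (@continuousM _ _ (fun=> t) (sval g)); [exact: cst_continuous|exact: (svalP g).2].
Qed.

Definition dcomb (s t : R) (f g : D) : D := exist _ _ (dcomb_subproof s t f g).

Definition zlin (s : R) (z1 : Z) (t : R) (z2 : Z) : Z :=
  (s *: z1.1 + t *: z2.1, dcomb s t z1.2 z2.2).

Definition cr (z : Z) : R := Defs.dpair z.1 z.2.

Lemma zdot_zlin (s : R) (z1 : Z) (t : R) (z2 a : Z) :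
  zdot (zlin s z1 t z2) a = s * zdot z1 a + t * zdot z2 a.
Proof. rewrite /zdot /Defs.dpair /= dual_D !dual_Z; ring. Qed.

Lemma zdotC (z w : Z) : zdot z w = zdot w z.
Proof. by rewrite /zdot addrC. Qed.

Lemma zdot_self (z : Z) : zdot z z = 2 * cr z.
Proof. rewrite /zdot /cr; ring. Qed.

Lemma cr_zlin (s : R) (z1 : Z) (t : R) (z2 : Z) :
  cr (zlin s z1 t z2) = s ^+ 2 * cr z1 + t ^+ 2 * cr z2 + s * t * zdot z1 z2.
Proof. rewrite /cr /zdot /Defs.dpair /= !dual_D !dual_Z; ring. Qed.

Lemma cfunE (z : Z) : cfun z = (cr z)%:E.
Proof. by []. Qed.

Local Open Scope ereal_scope.

Lemma part1_core (h : Z -> \bar R) (z : Z) : convexf h -> (forall a, cfun a <= h a) ->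
  h z = cfun z -> forall a, (zdot z a)%:E - h a <= cfun z.
Proof.
move=> ch hc hz a.
case ha: (h a) => [r| |]; last 2 first.
- by rewrite addeNy leNye.
- by have := hc a; rewrite ha cfunE leeNy_eq.
rewrite cfunE -EFinB lee_fin.
have : (zdot a z <= r + cr z)%R.
  apply: (@LL _ (cr a)) => t t0 t1.
  have t01 : (0 < t < 1)%R by rewrite t0 t1.
  have := ch t a z (zlin t a (1 - t) z) t01 erefl (fun v => erefl).
  rewrite ha hz cfunE -!EFinM -EFinD => hm.
  have := le_trans (hc (zlin t a (1 - t) z)) hm.
  by rewrite cfunE lee_fin cr_zlin.
rewrite zdotC; lra.
Qed.

Lemma part1 (h : Z -> \bar R) : classC h -> eqset h (@cfun R X) `<=` eqset (fsq h) (@cfun R X).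
Proof.
move=> [_ [ch hc]] z /= hz.
apply/eqP; rewrite eq_le; apply/andP; split.
  by apply: ge_ereal_sup => _ [a _ <-]; apply: part1_core.
apply: ereal_sup_ubound; exists z => //.
by rewrite hz cfunE zdot_self -EFinB; congr (_%:E); lra.
Qed.

Lemma key2 (h : Z -> \bar R) (z0 w : Z) (al : R) : classD h -> fsq h z0 = cfun z0 ->
  (forall a, (zdot w a)%:E - h a <= al%:E) -> (cr z0 + al < zdot z0 w)%R -> False.
Proof.
move=> [[[_ [_ hc]] _] hD] hz0 hw hlt.
have hz0a a r : h a = r%:E -> (zdot z0 a - r <= cr z0)%R.
  move=> ha; rewrite -lee_fin EFinB -ha -cfunE -hz0.
  by apply: ereal_sup_ubound; exists a.
have : (zdot w z0 <= al + cr z0)%R.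
  apply: (@LL _ (cr w)) => t t0 t1.
  have := hD (zlin t w (1 - t) z0); rewrite cfunE => hm.
  have : fsq h (zlin t w (1 - t) z0) <= (t * al + (1 - t) * cr z0)%R%:E.
    apply: ge_ereal_sup => _ [a _ <-].
    case ha: (h a) => [r| |]; last 2 first.
    - by rewrite addeNy leNye.
    - by have := hc a; rewrite ha cfunE leeNy_eq.
    rewrite -EFinB lee_fin zdot_zlin.
    have := hz0a a r ha; have := hw a; rewrite ha -EFinB lee_fin => h1 h2.
    have e : (t * zdot w a + (1 - t) * zdot z0 a - r = t * (zdot w a - r) + (1 - t) * (zdot z0 a - r))%R by ring.
    rewrite e; apply: lerD; apply: ler_wpM2l => //; lra.
  move=> /(le_trans hm); rewrite lee_fin cr_zlin //.
rewrite zdotC; lra.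
Qed.

End Fitz.

Section Gauge.
Variables (R : realType) (V : lmodType R) (S : set V).
Hypotheses (cS : convS S) (S0 : S 0) (absS : forall x, exists2 t : R, 0 < t & S (t^-1 *: x)).

Definition gset x := [set t : R | 0 < t /\ S (t^-1 *: x)].
Definition gauge x := inf (gset x).

Lemma gne x : gset x !=set0.
Proof. by have [t t0 St] := absS x; exists t. Qed.

Lemma ghas x : has_lbound (gset x).
Proof. by exists 0 => t [/ltW]. Qed.

Lemma gge0 x : 0 <= gauge x.
Proof. by apply: (@lb_le_inf _ (gset x)); [exact: gne| move=> t [/ltW]]. Qed.

Lemma gle x t : 0 < t -> S (t^-1 *: x) -> gauge x <= t.
Proof. by move=> t0 St; apply: ge_inf; [exact: ghas|]. Qed.

Lemma gle1 x : S x -> gauge x <= 1.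
Proof. by move=> Sx; apply: gle => //; rewrite invr1 scale1r. Qed.

Lemma glt1 x : gauge x < 1 -> S x.
Proof.
move=> /(inf_lt (gne x))[t [t0 St] t1].
have := cS (ltW t0) (ltW t1) St S0.
by rewrite scaler0 addr0 scalerA mulfV ?gt_eqF // scale1r.
Qed.

Lemma gsub : sublin gauge.
Proof.
split.
- move=> u w.
  have key t1 t2 : gset u t1 -> gset w t2 -> gauge (u + w) <= t1 + t2.
    move=> [t10 S1] [t20 S2].
    have s0 : 0 < t1 + t2 by rewrite addr_gt0.
    set a := t1 / (t1 + t2).
    have a0 : 0 <= a by rewrite divr_ge0 // ltW.
    have a1 : a <= 1 by rewrite ler_pdivrMr // mul1r lerDl ltW.
    apply: gle => //.
    have -> : (t1 + t2)^-1 *: (u + w) = a *: (t1^-1 *: u) + (1 - a) *: (t2^-1 *: w).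
      have n1 : t1 != 0 by rewrite gt_eqF.
      have n2 : t2 != 0 by rewrite gt_eqF.
      have n3 : t1 + t2 != 0 by rewrite gt_eqF.
      rewrite scalerDr !scalerA; congr (_ *: _ + _ *: _); rewrite /a; field => //.
      by rewrite n1 n3.
      by rewrite n2 n3.
    exact: (cS a0 a1 S1 S2).
  have h1 : gauge (u + w) - gauge w <= gauge u.
    apply: (@lb_le_inf _ (gset u)); first exact: gne.
    move=> a ua; suff : gauge (u + w) - a <= gauge w by lra.
    apply: (@lb_le_inf _ (gset w)); first exact: gne.
    by move=> b wb; have := key _ _ ua wb; lra.
  lra.
- move=> t u t0.
  have h : gauge (t *: u) / t <= gauge u.
    apply: (@lb_le_inf _ (gset u)); first exact: gne.
    move=> t' [t'0 St'].
    rewrite ler_pdivrMr // mulrC; apply: gle; first exact: mulr_gt0.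
    by rewrite scalerA invfM mulrAC mulVf ?gt_eqF // mul1r.
  by rewrite -ler_pdivrMl // mulrC.
Qed.

End Gauge.

Section Topo.
Variables (R : realType) (X : tvsType R).

Lemma absorb (S : set X) : nbhs 0 S -> forall x, exists2 t : R, 0 < t & S (t^-1 *: x).
Proof.
move=> S0 x.
have /= := scale_continuous ((0 : R^o), x) S.
rewrite scale0r => /(_ S0)[]/= B [B1 B2] BS.
move: B1 => /nbhs_ballP[e /= e0 eA].
have e2 : 0 < e / 2 by rewrite divr_gt0.
exists (e / 2)^-1; first by rewrite invr_gt0.
rewrite invrK; apply: (BS (e / 2, x)); split => /=; last exact: nbhs_singleton.
apply: eA; rewrite /ball /= sub0r normrN ger0_norm ?ltW //.
by rewrite ltr_pdivrMr // ltr_pMr // ltr1n.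
Qed.

Lemma T1 (U : set X) (x0 : X) : nbhs x0 U ->
  exists S : set X, [/\ convS S, S 0, nbhs 0 S & forall s, S s -> U (x0 + s)].
Proof.
move=> Ux0.
have [B cB [Bop Bnb]] := @locally_convex R X.
have [b [Bb bx0] bU] := Bnb x0 U Ux0.
exists [set s | b (x0 + s)]; split => /=.
- move=> a s1 s2 a0 a1 S1 S2.
  have := cB b (mem_set Bb) (x0 + s1) (x0 + s2) (Itv01 a0 a1) (mem_set S1) (mem_set S2).
  rewrite inE; congr b.
  change (a *: (x0 + s1) + (1 - a) *: (x0 + s2) = x0 + (a *: s1 + (1 - a) *: s2)).
  by rewrite !scalerDr addrACA -scalerDl subrKC scale1r.
- by rewrite addr0.
- have nb : nbhs x0 b by apply: open_nbhs_nbhs; split => //; exact: Bop.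
  have := nbhsB (- x0) nb; rewrite addNr; apply: filterS => _ [u bu <-] /=.
  by rewrite addrA subrr add0r.
- by move=> s Ss; apply: bU.
Qed.

Lemma T2 (S : set X) (L : X -> R) : convS S -> S 0 -> nbhs 0 S -> linf L ->
  (forall x, L x <= gauge S x) -> continuous L.
Proof.
move=> cS S0 nS lL hL x1.
have [L0 LD LZ LN] := linf_prop lL.
have absS := absorb nS.
apply/cvgrPdist_lt => eps eps0.
set k := 2 / eps.
have k0 : 0 < k by rewrite divr_gt0.
have ki : k^-1 != 0 by rewrite invr_eq0 gt_eqF.
have N1 : nbhs x1 [set t | S (k *: (t - x1))].
  have := nbhsB (z := 0) x1 (nbhs0Z (r := k^-1) ki nS).
  rewrite addr0; apply: filterS => _ [_ [s Ss <-] <-] /=.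
  by rewrite addrC addKr scalerA mulfV ?gt_eqF // scale1r.
have N2 : nbhs x1 [set t | S (k *: (x1 - t))].
  have := nbhsB (z := 0) x1 (nbhs0Z (r := k^-1) ki (nbhs0N nS)).
  rewrite addr0; apply: filterS => _ [_ [_ [s Ss <-] <-] <-] /=.
  by rewrite scalerN opprD opprK addrA subrr add0r scalerA mulfV ?gt_eqF // scale1r.
near=> t.
have h1 : S (k *: (t - x1)) by near: t; exact: N1.
have h2 : S (k *: (x1 - t)) by near: t; exact: N2.
have g1 := le_trans (hL _) (gle1 h1).
have g2 := le_trans (hL _) (gle1 h2).
rewrite LZ (LD t) LN in g1; rewrite LZ (LD x1) LN in g2.
have ek : k * eps = 2 by rewrite /k mulfVK ?gt_eqF.
rewrite real_ltr_norml ?num_real //; apply/andP; split; nra.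
Unshelve. all: by end_near.
Qed.

End Topo.

Section Sep.
Variables (R : realType) (X : tvsType R).
Local Notation Z := (Zsp X).
Local Notation D := (dualX X).

Definition VV : lmodType R := (X * ((X -> R^o) * R^o))%type.

Lemma VVadd (x1 x2 : X) (f1 f2 : X -> R^o) (r1 r2 : R) :
  ((x1, (f1, r1)) : VV) + (x2, (f2, r2)) = (x1 + x2, (f1 + f2, r1 + r2)).
Proof. reflexivity. Qed.

Lemma VVscale (a : R) (x : X) (f : X -> R^o) (r : R) :
  a *: ((x, (f, r)) : VV) = (a *: x, (a *: f, a * r)).
Proof. reflexivity. Qed.

Lemma sum_app (s : seq X) (F : X -> (X -> R^o)) u :
  (\sum_(v <- s) F v) u = \sum_(v <- s) F v u.
Proof.
elim: s => [|v s IH]; first by rewrite !big_nil.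
by rewrite !big_cons -IH.
Qed.

Lemma linf_sum (W : lmodType R) (f : W -> R) (s : seq X) (F : X -> W) :
  linf f -> f (\sum_(v <- s) F v) = \sum_(v <- s) f (F v).
Proof.
move=> lf; have [f0 fD _ _] := linf_prop lf.
elim: s => [|v s IH]; first by rewrite !big_nil f0.
by rewrite !big_cons fD IH.
Qed.

Lemma le_sum_mem (F : seq X) (g : X -> R) v :
  v \in F -> `|g v| <= \sum_(w <- F) `|g w|.
Proof.
elim: F => // w F IH; rewrite in_cons big_cons => /orP[/eqP->|vF].
  by rewrite lerDl sumr_ge0.
by apply: ler_wpDl => //; apply: IH.
Qed.

Lemma sublinD (W : lmodType R) (p q : W -> R) : sublin p -> sublin q ->
  sublin (fun u => p u + q u).
Proof.
move=> [p1 p2] [q1 q2]; split.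
  by move=> u w; have := p1 u w; have := q1 u w; lra.
by move=> t u t0; have := p2 t u t0; have := q2 t u t0; rewrite mulrDr; lra.
Qed.


Lemma sep (h : Z -> \bar R) (z0 : Z) : classR h -> fsq h z0 = cfun z0 ->
  (cfun z0 < h z0)%E ->
  exists (w : Z) (al : R), (forall a, ((zdot w a)%:E - h a <= al%:E)%E) /\
    cr z0 + al < zdot z0 w.
Proof.
move=> [[[hne [a1 ha1]] [ch hc]] hl] hz0 hlt.
set g := cr z0.
have hfin : forall a r, (h a <= r%:E)%E -> exists r', h a = r'%:E.
  move=> a r; have := hc a; case: (h a) => [r'| |].
  - by move=> _ _; exists r'.
  - by move=> _; rewrite leye_eq.
  - by rewrite leeNy_eq cfunE.
have hz0a a r : h a = r%:E -> (zdot z0 a - r <= g)%R.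
  move=> ha; rewrite -lee_fin EFinB -ha -cfunE -hz0.
  by apply: ereal_sup_ubound; exists a.
have [be [gbe hbe]] : exists be : R, g < be /\ (be%:E < h z0)%E.
  move: hlt; rewrite cfunE -/g; case: (h z0) => [r| |] hlt.
  - exists ((g + r) / 2)%R; rewrite lte_fin in hlt; split; first lra.
    by rewrite lte_fin; lra.
  - by exists (g + 1)%R; split; [lra| exact: ltry].
  - by rewrite ltNge leNye in hlt.
have [U [nU [F [e [e0 HP]]]]] := hl z0 be hbe.
have [S [cS S0 nS SU]] := T1 nU.
have absS := absorb nS.
have gS := gsub cS absS.
set be' := ((g + be) / 2)%R.
set rho := (be - be')%R.
have rho0 : (0 < rho)%R by rewrite /rho /be'; lra.
pose p1 := fun u : VV => gauge S u.1.
pose p2 := fun u : VV => ((\sum_(v <- F) `|u.2.1 v|) / e)%R.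
pose p3 := fun u : VV => (Num.max u.2.2 0 / rho)%R.
have sp1 : sublin p1 by split => [u w|t u t0]; [exact: gS.1| exact: gS.2].
have sp2 : sublin p2.
  split.
    move=> u w; rewrite /p2 -mulrDl ler_pM2r ?invr_gt0 // -big_split /=.
    by apply: ler_sum => v _; exact: ler_normD.
  move=> t u t0; rewrite /p2 mulrA ler_pM2r ?invr_gt0 // mulr_sumr.
  apply: ler_sum => v _.
  rewrite [X in `|X|](_ : _ = t * u.2.1 v)%R // normrM gtr0_norm //.
have sp3 : sublin p3.
  split.
    move=> u w; rewrite /p3 -mulrDl ler_pM2r ?invr_gt0 //.
    change ((u + w).2.2) with (u.2.2 + w.2.2)%R.
    rewrite ge_max; apply/andP; split.
      by apply: lerD; rewrite le_max lexx.
    by apply: addr_ge0; rewrite le_max lexx orbT.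
  move=> t u t0; rewrite /p3 mulrA ler_pM2r ?invr_gt0 //.
  change ((t *: u).2.2) with (t * u.2.2)%R.
  rewrite ge_max; apply/andP; split.
    by rewrite ler_pM2l // le_max lexx.
  by apply: mulr_ge0; [exact: ltW | rewrite le_max lexx orbT].
pose p := fun u => (p1 u + p2 u + p3 u)%R.
have sp : sublin p := sublinD (sublinD sp1 sp2) sp3.
have p1ge u : (0 <= p1 u)%R by apply: gge0.
have p2ge u : (0 <= p2 u)%R.
  by apply: divr_ge0; [exact: sumr_ge0 | exact: ltW].
have p3ge u : (0 <= p3 u)%R.
  by apply: divr_ge0; [rewrite le_max lexx orbT | exact: ltW].
pose C : set VV := [set u | exists a : Z, exists r : R, (h a <= r%:E)%E /\
  u = (a.1 - z0.1, ((sval a.2 : X -> R^o) - sval z0.2, r - be'))%R].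
have cC : convS C.
  move=> t u1 u2 t0 t1 [b1 [r1 [hb1 ->]]] [b2 [r2 [hb2 ->]]].
  have [->|tn0] := eqVneq t 0%R.
    by rewrite scale0r add0r subr0 scale1r; exists b2, r2.
  have [->|tn1] := eqVneq t 1%R.
    by rewrite scale1r subrr scale0r addr0; exists b1, r1.
  have t01 : (0 < t < 1)%R by rewrite !lt_neqAle eq_sym tn0 tn1 t0 t1.
  exists (zlin t b1 (1 - t) b2), (t * r1 + (1 - t) * r2)%R; split.
    have [r1' e1] := hfin _ _ hb1; have [r2' e2] := hfin _ _ hb2.
    have := ch t b1 b2 (zlin t b1 (1 - t) b2) t01 erefl (fun v => erefl).
    rewrite e1 e2 -!EFinM -EFinD => hm; apply: le_trans hm _.
    rewrite e1 lee_fin in hb1; rewrite e2 lee_fin in hb2.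
    rewrite lee_fin; apply: lerD; apply: ler_wpM2l => //; lra.
  rewrite VVscale VVscale VVadd; congr (_, (_, _)).
  - rewrite /= !scalerBr addrACA -opprD -scalerDl subrKC scale1r //.
  - apply/funext => v.
    change (t * (sval b1.2 v - sval z0.2 v) + (1 - t) * (sval b2.2 v - sval z0.2 v) =
            (t * sval b1.2 v + (1 - t) * sval b2.2 v) - sval z0.2 v)%R.
    ring.
  - ring.
have [r1 e1] : exists r, h a1 = r%:E.
  by move: ha1 (hne a1); case: (h a1) => [r| |] //; exists r.
have Cc1 : C (a1.1 - z0.1, ((sval a1.2 : X -> R^o) - sval z0.2, r1 - be'))%R.
  by exists a1, r1; rewrite e1.
have mC : forall c, C c -> (1 <= p c)%R.
  move=> _ [a [r [har ->]]]; rewrite leNgt; apply/negP => plt.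
  set u := (_, (_, _)) in plt.
  have q1 : (p1 u < 1)%R by have := p2ge u; have := p3ge u; rewrite /p in plt; lra.
  have q2 : (p2 u < 1)%R by have := p1ge u; have := p3ge u; rewrite /p in plt; lra.
  have q3 : (p3 u < 1)%R by have := p1ge u; have := p2ge u; rewrite /p in plt; lra.
  have Ua : U a.1.
    by have := SU _ (glt1 cS S0 absS q1); rewrite addrC subrK.
  have Fa : forall v, v \in F -> (`|sval a.2 v - sval z0.2 v| < e)%R.
    move=> v vF; rewrite /p2 ltr_pdivrMr // mul1r in q2.
    exact: le_lt_trans (le_sum_mem _ vF) q2.
  have rb : (r < be)%R.
    rewrite /p3 ltr_pdivrMr // mul1r in q3.
    have : (r - be' <= Num.max (r - be') 0)%R by rewrite le_max lexx.
    change (u.2.2) with (r - be')%R in q3.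
    rewrite /rho in q3; lra.
  have := lt_le_trans (HP a Ua Fa) har; rewrite lte_fin; lra.
have [f [lf fp fC]] := MazurOrlicz sp cC Cc1 mC.
have [f0 fD fZ fN] := linf_prop lf.
pose L1 := fun x : X => f (x, (0, 0)).
pose L2 := fun phi : X -> R^o => f (0, (phi, 0)).
pose la := f (0, (0, 1)).
have fdec : forall (x : X) (phi : X -> R^o) (r : R), f (x, (phi, r)) = L1 x + L2 phi + r * la.
  move=> x phi r; rewrite /L1 /L2 /la -fZ -!fD VVscale !VVadd.
  by congr f; congr (_, (_, _)); rewrite ?scaler0 ?addr0 ?add0r ?mulr0 ?mulr1 ?addr0 ?add0r.
have L1lin : linf L1.
  move=> a x y; rewrite /L1 -fZ -fD VVscale VVadd.
  by congr f; congr (_, (_, _)); rewrite ?scaler0 ?addr0 ?mulr0.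
have L2lin : linf L2.
  move=> a x y; rewrite /L2 -fZ -fD VVscale VVadd.
  by congr f; congr (_, (_, _)); rewrite ?scaler0 ?addr0 ?mulr0.
have [L10 L1D L1Z L1N] := linf_prop L1lin.
have [L20 L2D L2Z L2N] := linf_prop L2lin.
have g0 : gauge S 0 = 0 := sublin0 gS.
have sum0 : forall phi : X -> R^o, (forall v, v \in F -> phi v = 0) ->
    \sum_(v <- F) `|phi v| = 0.
  by move=> phi H; rewrite big1_seq // => v /andP[_ vF]; rewrite H ?normr0.
have L1g : forall x, L1 x <= gauge S x.
  move=> x; apply: le_trans (fp _) _; rewrite /p /p1 /p2 /p3 /= sum0 // maxxx.
  by rewrite !mul0r !addr0.
have cL1 : continuous L1 := T2 cS S0 nS L1lin L1g.
pose yL1 : D := exist _ L1 (conj L1lin cL1).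
have L2b : forall phi, L2 phi <= (\sum_(v <- F) `|phi v|) / e.
  move=> phi; apply: le_trans (fp _) _; rewrite /p /p1 /p2 /p3 /= g0 maxxx.
  by rewrite mul0r add0r addr0.
have la0 : 0 <= la.
  have := fp (0, (0, -1)); rewrite fdec L10 L20 /p /p1 /p2 /p3 /= g0 sum0 //.
  rewrite (_ : Num.max (-1) 0 = 0) ?max_r ?ler0N1 //.
  by rewrite !mul0r !add0r; lra.
pose delta := fun v : X => (fun u : X => if u == v then 1 else 0 : R^o).
pose y := \sum_(v <- undup F) L2 (delta v) *: v.
have L2dual : forall d : D, L2 (sval d) = sval d y.
  move=> d; pose phi := (sval d : X -> R^o).
  pose psi := \sum_(v <- undup F) sval d v *: delta v.
  have agree : forall u, u \in F -> phi u = psi u.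
    move=> u uF; rewrite /psi sum_app (big_rem u) ?mem_undup //=.
    rewrite big1_seq ?addr0.
      by change (phi u = sval d u * (if u == u then 1 else 0)); rewrite eqxx mulr1.
    move=> v /andP[_ vin].
    have uv : u != v.
      by apply/eqP => ev; rewrite -ev mem_rem_uniqF ?undup_uniq in vin.
    by change (sval d v * (if u == v then 1 else 0) = 0); rewrite (negbTE uv) mulr0.
  have eL2 : L2 phi = L2 psi.
    have B : forall chi, (forall u, u \in F -> chi u = 0) -> L2 chi <= 0.
      by move=> chi H; apply: le_trans (L2b chi) _; rewrite sum0 // mul0r.
    have h1 : L2 (phi - psi) <= 0.
      by apply: B => u uF; change (phi u - psi u = 0); rewrite agree ?subrr.
    have h2 : L2 (psi - phi) <= 0.
      by apply: B => u uF; change (psi u - phi u = 0); rewrite agree ?subrr.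
    rewrite L2D L2N in h1; rewrite L2D L2N in h2; lra.
  rewrite eL2 /psi (linf_sum (undup F) _ L2lin) /y (linf_sum (undup F) _ (svalP d).1).
  by apply: eq_bigr => v _; rewrite L2Z dual_Z mulrC.
pose w0 : Z := (y, yL1).
have Lin : forall a : Z, zdot w0 a = sval a.2 y + L1 a.1 by [].
have KI : forall a r, (h a <= r%:E)%E -> 1 <= zdot w0 a - zdot w0 z0 + (r - be') * la.
  move=> a r har; have := fC _ (ex_intro _ a (ex_intro _ r (conj har erefl))).
  rewrite fdec L1D L1N L2D L2N !L2dual !Lin; lra.
have [lap|laz] : 0 < la \/ la = 0.
  by move: la0; rewrite le_eqVlt => /orP[/eqP<-|]; [right|left].
  set k := la^-1.
  have k0 : 0 < k by rewrite invr_gt0.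
  have kla : k * la = 1 by rewrite mulVf // gt_eqF.
  exists (zlin 0 z0 (- k) w0), (- be' - (1 + zdot w0 z0) * k); split.
    move=> a; rewrite zdot_zlin mul0r add0r.
    case E: (h a) => [r| |].
    - rewrite -EFinB lee_fin.
      have har : (h a <= r%:E)%E by rewrite E.
      have ki := KI a r har.
      have ek : k * (zdot w0 a - zdot w0 z0 + (r - be') * la) =
               k * zdot w0 a - k * zdot w0 z0 + (k * la) * (r - be') by ring.
      rewrite kla mul1r in ek.
      have := ler_wpM2l (ltW k0) ki; rewrite ek mulr1 => hk.
      rewrite mulrDl mul1r !mulNr (mulrC (zdot w0 z0)); lra.
    - by rewrite addeNy leNye.
    - by have := hc a; rewrite E leeNy_eq cfunE.
  rewrite [zdot z0 _]zdotC zdot_zlin mul0r add0r mulrDl mul1r !mulNr (mulrC (zdot w0 z0)).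
  rewrite /be' in k0 *; lra.
exists (zlin 1 z0 (-1) w0), (g - 1 - zdot w0 z0); split.
  move=> a; rewrite zdot_zlin mul1r mulN1r.
  case E: (h a) => [r| |].
  - rewrite -EFinB lee_fin.
    have har : (h a <= r%:E)%E by rewrite E.
    have := KI a r har; rewrite laz mulr0 addr0 => ki.
    have := hz0a a r E; lra.
  - by rewrite addeNy leNye.
  - by have := hc a; rewrite E leeNy_eq cfunE.
rewrite [zdot z0 _]zdotC zdot_zlin mul1r mulN1r zdot_self -/g; lra.
Qed.

End Sep.

Theorem lemma1p1 (R : realType) (X : tvsType R)
  (hX : hausdorff_space X) (ntX : exists x : X, x != 0)
  (h : Zsp X -> \bar R) :
  classC h ->
  eqset h (@cfun R X) `<=` eqset (fsq h) (@cfun R X) /\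
  (classD h -> eqset h (@cfun R X) = eqset (fsq h) (@cfun R X)).
Proof.
move=> hC; split; first exact: part1.
move=> hDd; apply/seteqP; split; first exact: part1.
move=> z /= hz.
apply/eqP; rewrite eq_le (hDd.1.1.2.2 z) andbT.
rewrite leNgt; apply/negP => hlt.
have [w [al [hw hwl]]] := sep hDd.1 hz hlt.
exact: key2 hDd hz hw hwl.
Qed.
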